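(* Let $\mathbb{H}$ be a reproducing kernel Hilbert space with inner product $\langle\cdot,\cdot\rangle$ and feature map $\phi$, and let $(X,A,Y)$ be jointly distributed with $Y=\langle\phi(X),y\rangle$ and $A=\langle\phi(X),a\rangle$ for some nonzero $y,a\in\mathbb{H}$, with $\operatorname{Var}(Y),\operatorname{Var}(A)>0$. Then for every (possibly randomized) representation $Z=g(X)$ with $\operatorname{Var}\mathbb{E}[A\mid Z]=0$, $$\operatorname{Var}\mathbb{E}[Y\mid Z]\le \operatorname{Var}(Y)-\frac{\operatorname{Cov}(A,Y)^2}{\operatorname{Var}(A)}=\operatorname{Var}(Y)(1-\rho_{YA}^2),$$ where $\rho_{YA}$ is the correlation coefficient of $Y$ and $A$.
   Context: A (possibly randomized) representation is $Z=g(X,S)$ for a measurable $g$ and auxiliary randomness $S$ independent of $(X,A,Y)$. $\phi(X)$ is assumed to have finite second moment in $\mathbb{H}$. *)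

(* Defs.v *)
From HB Require Import structures.
From mathcomp Require Import all_boot all_order all_algebra.
From mathcomp Require Import all_classical all_reals all_analysis.
Set Implicit Arguments. Unset Strict Implicit. Unset Printing Implicit Defensive.
Import Order.TTheory GRing.Theory Num.Theory.
Local Open Scope classical_set_scope.
Local Open Scope ring_scope.

Section hilbert.
Context {R : realType} {H : lmodType R}.

Definition inner_product (ip : H -> H -> R) : Prop :=
  [/\ (forall f g, ip f g = ip g f),
      (forall (c : R) f g h, ip (c *: f + g) h = c * ip f h + ip g h),
      (forall f, 0 <= ip f f) &
      (forall f, ip f f = 0 -> f = 0)].

(** completeness of [H] for the metric d(f,g) = sqrt (ip (f-g) (f-g))
    (stated with squared distances). *)
Definition ip_complete (ip : H -> H -> R) : Prop :=
  forall u : nat -> H,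
    (forall e : R, 0 < e -> exists N : nat, forall m n : nat,
        (N <= m)%N -> (N <= n)%N -> ip (u m - u n) (u m - u n) < e) ->
    exists l : H, forall e : R, 0 < e -> exists N : nat, forall n : nat,
        (N <= n)%N -> ip (u n - l) (u n - l) < e.

Definition hilbert_space (ip : H -> H -> R) : Prop :=
  inner_product ip /\ ip_complete ip.

(** [H] (with inner product [ip]) is a reproducing kernel Hilbert space of
    real functions on [TX], realised through the injective linear map
    [ev : H -> (TX -> R)], with feature map [phi] :
    f(x) = <f, phi x>  (reproducing property). *)
Definition RKHS {TX : Type} (ip : H -> H -> R) (ev : H -> TX -> R)
    (phi : TX -> H) : Prop :=
  [/\ hilbert_space ip,
      (forall (c : R) f g x, ev (c *: f + g) x = c * ev f x + ev g x),
      injective ev &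
      (forall f x, ev f x = ip f (phi x))].
End hilbert.

Section condexp.
Context {d dZ : measure_display} {Omega : measurableType d}
  {TZ : measurableType dZ} {R : realType}.

Definition sigma_measurable (Z : Omega -> TZ) (W : Omega -> R) : Prop :=
  forall B : set R, measurable B ->
    exists C : set TZ, measurable C /\ W @^-1` B = Z @^-1` C.

Definition is_cond_exp (P : probability Omega R) (Z : Omega -> TZ)
    (V W : Omega -> R) : Prop :=
  [/\ sigma_measurable Z W,
      P.-integrable setT (fun w => (W w)%:E) &
      forall C : set TZ, measurable C ->
        (\int[P]_(w in Z @^-1` C) (W w)%:E =
         \int[P]_(w in Z @^-1` C) (V w)%:E)%E].
End condexp.

(* Main.v *)
Require Import Defs.
From HB Require Import structures.
From mathcomp Require Import all_boot all_order all_algebra.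
From mathcomp Require Import all_classical all_reals all_analysis.
From mathcomp Require Import ring lra measurable_realfun.
Import Order.TTheory GRing.Theory Num.Theory.
Local Open Scope classical_set_scope.
Local Open Scope ring_scope.

Lemma itv_floor (R : realType) (x e : R) (k : int) : 0 < e ->
  (k%:~R * e <= x < k%:~R * e + e) = (Num.floor (x / e) == k).
Proof.
move=> d0.
have E : (k%:~R * e <= x < k%:~R * e + e) = (k%:~R <= x / e < (k + 1)%:~R).
  by rewrite ler_pdivlMr // ltr_pdivrMr // intrD mulrDl mul1r.
rewrite E; apply/idP/eqP => [/floor_def //| <-]; exact: floor_itv.
Qed.

Section core.
Context d dZ (Omega : measurableType d) (TZ : measurableType dZ) (R : realType)
  (P : probability Omega R) (Z : Omega -> TZ) (mZ : measurable_fun setT Z)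
  (V W : Omega -> R) (mV : measurable_fun setT V)
  (iV : P.-integrable setT (EFin \o V))
  (iV2 : P.-integrable setT (fun w => (V w ^+ 2)%:E))
  (sW : sigma_measurable Z W) (iW : P.-integrable setT (EFin \o W))
  (hVW : forall C, measurable C ->
    (\int[P]_(w in Z @^-1` C) (W w)%:E = \int[P]_(w in Z @^-1` C) (V w)%:E)%E).

Lemma core_mW : measurable_fun setT W.
Proof.
move=> _ B mB; rewrite setTI; have [C [mC ->]] := sW _ mB.
by rewrite -[Z @^-1` C]setTI; apply: mZ.
Qed.

Lemma lin_int (D : set Omega) (f : Omega -> R) (a b : R) : measurable D ->
  P.-integrable setT (EFin \o f) ->
  (\int[P]_(w in D) (a * f w + b)%:E = a%:E * \int[P]_(w in D) (f w)%:E + (b%:E * P D))%E.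
Proof.
move=> mD iF.
have iFD : P.-integrable D (EFin \o f) by apply: integrableS iF.
rewrite (@integralD_EFin _ _ _ _ _ mD (fun w => a * f w) (cst b)).
- congr (_ + _)%E.
  + rewrite -integralZl //; by apply: eq_integral => x _; rewrite /= EFinM.
  + rewrite -integral_cst //; by apply: eq_integral.
- apply: (@eq_integrable _ _ _ P D mD (fun x => (a%:E * (EFin \o f) x)%E)).
    by move=> x _ /=; rewrite EFinM.
  exact: integrableZl.
- exact: finite_measure_integrable_cst.
Qed.
Lemma lin_integrable (D : set Omega) (f : Omega -> R) (a b : R) : measurable D ->
  P.-integrable setT (EFin \o f) ->
  P.-integrable D (fun w => (a * f w + b)%:E).
Proof.
move=> mD iF.
have iFD : P.-integrable D (EFin \o f) by apply: integrableS iF.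
apply: (@eq_integrable _ _ _ P D mD (fun x => ((a%:E * (EFin \o f) x) + (EFin \o cst b) x)%E)).
  by move=> x _ /=; rewrite EFinD EFinM.
apply: integrableD => //; last exact: finite_measure_integrable_cst.
exact: integrableZl.
Qed.

Lemma piece (c e : R) : 0 < e ->
  (\int[P]_(w in W @^-1` `[c, (c + e)%R[) (W w ^+ 2)%:E <=
   \int[P]_(w in W @^-1` `[c, (c + e)%R[) ((V w ^+ 2 + e ^+ 2)%R)%:E)%E.
Proof.
move=> e0.
have mW := core_mW.
set B := W @^-1` _.
have mB : measurable B.
  by rewrite -[B]setTI; apply: core_mW => //; exact: measurable_itv.
have [C [mC BC]] := sW _ (measurable_itv `[c, c+e[).
apply: (@le_trans _ _ (\int[P]_(w in B) ((2 * c * W w + (e ^+ 2 - c ^+ 2))%R)%:E)%E).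
  apply: ge0_le_integral => //.
  - by move=> x _; rewrite lee_fin; exact: sqr_ge0.
  - by apply/measurable_EFinP; apply: measurable_funTS; exact: measurable_funX.
  - apply/measurable_EFinP; apply: measurable_funTS; apply: measurable_funD => //.
    exact: measurable_funM.
  - move=> x; rewrite /B /= in_itv /= => /andP[h1 h2]; rewrite lee_fin.
    nra.
rewrite lin_int //.
rewrite /B BC hVW // -BC -lin_int //.
apply: le_integral => //.
- exact: lin_integrable.
- apply: (@eq_integrable _ _ _ P _ mB (fun w => (1 * (V w ^+ 2) + e ^+ 2)%:E)).
    by move=> x _; rewrite mul1r.
  exact: lin_integrable.
- move=> x _; rewrite lee_fin -subr_ge0.
  have -> : V x ^+ 2 + e ^+ 2 - (2 * c * V x + (e ^+ 2 - c ^+ 2)) = (V x - c) ^+ 2 by ring.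
  exact: sqr_ge0.
Qed.

End core.
Lemma ip_cs (R : realType) (H : lmodType R) (ip : H -> H -> R) :
  inner_product ip -> forall f g, ip f g ^+ 2 <= ip f f * ip g g.
Proof.
case=> sym lin pos def f g.
have ip0 : forall h, ip 0 h = 0.
  move=> h; have := lin 1 0 0 h; rewrite scaler0 addr0 mul1r => E.
  by apply: (addrI (ip 0 h)); rewrite addr0 -E.
have quad : forall t, ip ((- t) *: g + f) ((- t) *: g + f) =
   t ^+ 2 * ip g g - 2 * t * ip f g + ip f f.
  move=> t; rewrite lin (sym g) lin (sym f ((- t) *: g + f)) lin (sym g f); ring.
have [g0|gpos] := eqVneq (ip g g) 0.
  by rewrite (def _ g0) (sym f) !ip0 expr0n mulr0.
have gp : 0 < ip g g by rewrite lt_neqAle eq_sym gpos pos.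
have := pos ((- (ip f g / ip g g)) *: g + f); rewrite quad => h.
have : 0 <= ip g g * ((ip f g / ip g g) ^+ 2 * ip g g - 2 * (ip f g / ip g g) * ip f g + ip f f).
  by rewrite mulr_ge0 // ltW.
have -> : ip g g * ((ip f g / ip g g) ^+ 2 * ip g g - 2 * (ip f g / ip g g) * ip f g + ip f f)
  = ip f f * ip g g - ip f g ^+ 2.
  by field; rewrite gpos.
by rewrite subr_ge0.
Qed.
Lemma L2_of d (T : measurableType d) (R : realType) (P : probability T R) (f : T -> R) :
  measurable_fun setT f -> P.-integrable setT (fun w => (f w ^+ 2)%:E) ->
  f \in Lfun P 2%:E.
Proof.
move=> mf /integrableP [_ fi].
apply/andP; split; first by rewrite inE/=.
rewrite inE/= /finite_norm unlock.
apply: poweR_lty.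
apply: le_lt_trans fi.
rewrite le_eqVlt; apply/orP; left; apply/eqP.
apply: eq_integral => x _ /=.
by rewrite normrX powR_mulrn.
Qed.



Section core2.
Context d dZ (Omega : measurableType d) (TZ : measurableType dZ) (R : realType)
  (P : probability Omega R) (Z : Omega -> TZ) (mZ : measurable_fun setT Z)
  (V W : Omega -> R) (mV : measurable_fun setT V)
  (iV : P.-integrable setT (EFin \o V))
  (iV2 : P.-integrable setT (fun w => (V w ^+ 2)%:E))
  (sW : sigma_measurable Z W) (iW : P.-integrable setT (EFin \o W))
  (hVW : forall C, measurable C ->
    (\int[P]_(w in Z @^-1` C) (W w)%:E = \int[P]_(w in Z @^-1` C) (V w)%:E)%E).

Lemma core : (\int[P]_w (W w ^+ 2)%:E <= \int[P]_w (V w ^+ 2)%:E)%E.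
Proof.
have mW : measurable_fun setT W := @core_mW _ _ _ _ _ _ mZ W sW.
apply/lee_addgt0Pr => e e0.
pose dl := Num.sqrt e.
have dl0 : 0 < dl by rewrite sqrtr_gt0.
have dl2 : dl ^+ 2 = e by rewrite sqr_sqrtr // ltW.
clearbody dl.
pose F := fun i : nat => if @pickle_inv int i is Some k
  then W @^-1` `[k%:~R * dl, (k%:~R * dl + dl)%R[ else set0.
have mF : forall i, measurable (F i).
  move=> i; rewrite /F; case: (pickle_inv i) => [k|//].
  by rewrite -[X in measurable X]setTI; apply: mW => //; exact: measurable_itv.
have cover : \bigcup_i F i = setT.
  apply/seteqP. split. done. move=> w _.
  exists (pickle (Num.floor (W w / dl))). done.
  rewrite /F. rewrite pickleK_inv /=. rewrite in_itv /=. rewrite itv_floor. done. done.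
have triv : trivIset setT F.
  move=> i j _ _ [w [Fi Fj]].
  move: Fi Fj; rewrite /F.
  case Ei: (pickle_inv i) => [k|]; last by [].
  case Ej: (pickle_inv j) => [k'|]; last by [].
  rewrite /= !in_itv /= !(itv_floor _ _ _ _ dl0) => /eqP hk /eqP hk'.
  by rewrite -(@pickle_invK int i) -(@pickle_invK int j) Ei Ej /= -hk -hk'.
have mW2 : measurable_fun setT (fun w => (W w ^+ 2)%:E).
  by apply/measurable_EFinP; apply: measurable_funX.
have mV2 : measurable_fun setT (fun w => ((V w ^+ 2 + dl ^+ 2)%R)%:E).
  by apply/measurable_EFinP; apply: measurable_funD; [exact: measurable_funX| exact: measurable_cst].
have eqW : (\int[P]_w (W w ^+ 2)%:E = \sum_(i <oo) \int[P]_(w in F i) (W w ^+ 2)%:E)%E.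
  rewrite -ge0_integral_bigcup; first by rewrite cover.
  - exact: mF.
  - by rewrite cover.
  - by move=> x _; rewrite lee_fin; exact: sqr_ge0.
  - exact: triv.
have eqV : (\int[P]_w (V w ^+ 2)%:E + e%:E =
    \sum_(i <oo) \int[P]_(w in F i) ((V w ^+ 2 + dl ^+ 2)%R)%:E)%E.
  rewrite -ge0_integral_bigcup; last 4 first.
  - exact: mF.
  - by rewrite cover.
  - by move=> x _; rewrite lee_fin addr_ge0 // sqr_ge0.
  - exact: triv.
  rewrite cover.
  under [X in (_ = X)%E]eq_integral do rewrite EFinD.
  rewrite ge0_integralD; last 5 first.
  - exact: measurableT.
  - by move=> x _; rewrite lee_fin sqr_ge0.
  - by apply/measurable_EFinP; exact: measurable_funX.
  - by move=> x _; rewrite lee_fin sqr_ge0.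
  - exact: measurable_cst.
  rewrite (_ : (\int[P]__ (dl ^+ 2)%:E)%E = (\int[P]_x (cst (dl ^+ 2)%:E x))%E); last by [].
  rewrite integral_cst; last exact: measurableT.
  rewrite [X in (_ * X)%E](_ : _ = 1%E); last exact: probability_setT.
  by rewrite mule1 dl2.
rewrite eqW eqV.
apply: lee_nneseries.
  by move=> i _ _; apply: integral_ge0 => x _; rewrite lee_fin sqr_ge0.
move=> i _; rewrite /F; case: (pickle_inv i) => [k|].
  by apply: (@piece _ _ _ _ _ P Z mZ V W iV iV2 sW iW hVW).

by rewrite !integral_set0.
Qed.
End core2.



Lemma var_int d (T : measurableType d) (R : realType) (P : probability T R) (f : T -> R) :
  'V_P[f] = (\int[P]_w (((f w - fine 'E_P[f]) ^+ 2)%:E))%E.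
Proof.
rewrite /variance covariance.unlock {1}expectation.unlock.
by apply: eq_integral => w _; rewrite /= expr2.
Qed.

Theorem theorem3
  (R : realType)
  (d dX dS dZ : measure_display)
  (Omega : measurableType d) (P : probability Omega R)
  (TX : measurableType dX) (TS : measurableType dS) (TZ : measurableType dZ)
  (H : lmodType R) (ip : H -> H -> R) (ev : H -> TX -> R) (phi : TX -> H)
  (hH : RKHS ip ev phi)
  (X : Omega -> TX) (S : Omega -> TS) (g : TX * TS -> TZ)
  (y a : H)
  (mX : measurable_fun setT X) (mS : measurable_fun setT S)
  (mg : measurable_fun setT g)
  (* phi(X) is an H-valued random element with finite second moment *)
  (mphiX : forall h : H, measurable_fun setT (fun w => ip (phi (X w)) h))
  (mnorm : measurable_fun setT (fun w => ip (phi (X w)) (phi (X w))))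
  (second_moment : P.-integrable setT (fun w => (ip (phi (X w)) (phi (X w)))%:E))
  (* auxiliary randomness S independent of X (hence of (X, A, Y)) *)
  (indep : forall (B : set TX) (C : set TS), measurable B -> measurable C ->
     P (X @^-1` B `&` S @^-1` C) = (P (X @^-1` B) * P (S @^-1` C))%E)
  (hy : y != 0) (ha : a != 0)
  (vY : (0 < 'V_P[fun w => ip (phi (X w)) y])%E)
  (vA : (0 < 'V_P[fun w => ip (phi (X w)) a])%E) :
  let Yv := fun w => ip (phi (X w)) y in
  let Av := fun w => ip (phi (X w)) a in
  let Z := fun w => g (X w, S w) in
  forall EA EY : Omega -> R,
    is_cond_exp P Z Av EA -> is_cond_exp P Z Yv EY ->
    'V_P[EA] = 0%E ->
    let varY := fine 'V_P[Yv] in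
    let varA := fine 'V_P[Av] in
    let cov := fine (covariance P Av Yv) in
    let rho := cov / Num.sqrt (varY * varA) in
    ('V_P[EY] <= (varY - cov ^+ 2 / varA)%:E)%E /\
    varY - cov ^+ 2 / varA = varY * (1 - rho ^+ 2).
Proof.
move=> Yv Av Z EA EY [sA iA hA] [sY iY hY] vEA varY varA cov rho.
case: hH => [[ipH _] _ _ _].
have cs := ip_cs _ _ _ ipH.
have sq_int : forall h, P.-integrable setT (fun w => (ip (phi (X w)) h ^+ 2)%:E).
  move=> h.
  have iZ : P.-integrable setT (fun w => ((ip h h)%:E * (ip (phi (X w)) (phi (X w)))%:E)%E).
    by apply: integrableZl.

  apply: (le_integrable _ _ _ iZ).
  - exact: measurableT.
  - by apply/measurable_EFinP; apply: measurable_funX.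
  - move=> w _; rewrite -EFinM !abse_EFin lee_fin (ger0_norm (sqr_ge0 _)).
    apply: le_trans (cs _ _) _; rewrite mulrC; exact: ler_norm.
have L2 : forall h, (fun w => ip (phi (X w)) h) \in Lfun P 2%:E.
  by move=> h; apply: L2_of; [exact: mphiX|exact: sq_int].
have Pfin : P setT \is a fin_num by exact: fin_num_measure.
have L1 : forall h, (fun w => ip (phi (X w)) h) \in Lfun P 1.
  by move=> h; apply: (Lfun_subset12 Pfin).
have I1 : forall h, P.-integrable setT (EFin \o (fun w => ip (phi (X w)) h)).
  by move=> h; apply/Lfun1_integrable.
have mZ : measurable_fun setT Z.
  by apply: measurableT_comp => //; exact: measurable_fun_pair.
have mB : forall C, measurable C -> measurable (Z @^-1` C).
  by move=> C mC; rewrite -[X in measurable X]setTI; apply: mZ.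
have mEA : measurable_fun setT EA.
  by apply/measurable_EFinP; exact: (measurable_int _ iA).
have LA1 : EA \in Lfun P 1 by apply/Lfun1_integrable.
have LY1 : EY \in Lfun P 1 by apply/Lfun1_integrable.
pose m := fine ('E_P[EA])%E.
have Em : ('E_P[EA] = m%:E)%E by rewrite fineK // expectation_fin_num.
pose mY := fine ('E_P[EY])%E.
have EmY : ('E_P[EY] = mY%:E)%E by rewrite fineK // expectation_fin_num.
have aeA : ae_eq P setT (fun w => (EA w)%:E) (cst m%:E).
  have mf : measurable_fun setT (fun w => ((EA w - m) ^+ 2)%:E).
    apply/measurable_EFinP; apply: measurable_funX; apply: measurable_funB => //.
  have h0 : (\int[P]_w `|((EA w - m) ^+ 2)%:E| = 0)%E.
    rewrite -vEA var_int; apply: eq_integral => w _.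
    by rewrite gee0_abs // lee_fin sqr_ge0.
  have := (@ae_eq_integral_abs _ _ _ P setT measurableT _ mf).1 h0.
  rewrite /ae_eq; apply: filterS => w /= H0 _.
  have := H0 I; case => /eqP; rewrite sqrf_eq0 subr_eq0 => /eqP ->; done.
have hAB : forall C, measurable C ->
    (\int[P]_(w in Z @^-1` C) (Av w)%:E = \int[P]_(w in Z @^-1` C) (cst m%:E) w)%E.
  move=> C mC; rewrite -hA //.
  apply: ae_eq_integral => //.
  - exact: mB.
  - by apply/measurable_EFinP; apply: measurable_funTS.
  - exact: (ae_eq_subset _ aeA).
have P1 : (P [set: Omega] = 1)%E by exact: probability_setT.
have EAv : ('E_P[Av] = m%:E)%E.
  rewrite expectation.unlock.
  have := hAB setT measurableT; rewrite preimage_setT => ->.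
  rewrite integral_cst // [X in (_ * X)%E](_ : _ = 1%E) ?mule1 //; exact: probability_setT.
have EYv : ('E_P[Yv] = mY%:E)%E.
  rewrite -EmY !expectation.unlock.
  by have := hY setT measurableT; rewrite preimage_setT => ->.
pose lam := cov / varA.
pose k := lam * m - mY.
pose V := fun w => Yv w + (- lam) * Av w + k.
pose W := fun w => EY w - mY.
have eV : V = ((Yv \+ (- lam) \o* Av) \+ cst k)%R.
  by apply/funext => w; rewrite /V /= [Av w * _]mulrC.
have V2 : V \in Lfun P 2%:E.
  rewrite eV; apply: rpredD; first exact: lee1n.
  - move=> h; apply: rpredD.
    + exact: L2.
    + by apply: Lfun_scale; [rewrite ler1n|exact: L2].
  - by move=> h; exact: Lfun_cst.
have mV : measurable_fun setT V by move: V2; rewrite inE => /andP[]; rewrite inE.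
have iV : P.-integrable setT (EFin \o V) by apply/Lfun1_integrable; exact: Lfun_subset12.
have iV2 : P.-integrable setT (fun w => (V w ^+ 2)%:E) by exact: Lfun2_integrable_sqr.
have sW : sigma_measurable Z W.
  move=> B mB0.
  have mB' : measurable ((fun x : R => x - mY) @^-1` B).
    have : measurable_fun setT (fun x : R => x - mY) by apply: measurable_funB.
    by move=> /(_ measurableT B mB0); rewrite setTI.
  have [C [mC hC]] := sY _ mB'.
  by exists C; split => //; rewrite -hC.
have iW : P.-integrable setT (EFin \o W).
  apply: (@eq_integrable _ _ _ P setT measurableT (fun w => ((1 * EY w + - mY)%R)%:E)).
    by move=> w _; rewrite /W /= mul1r.
  exact: lin_integrable.
have hVW : forall C, measurable C ->
    (\int[P]_(w in Z @^-1` C) (W w)%:E = \int[P]_(w in Z @^-1` C) (V w)%:E)%E.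
  move=> C mC.
  have mBC := mB C mC.
  rewrite (_ : (\int[P]_(w in Z @^-1` C) (W w)%:E =
      \int[P]_(w in Z @^-1` C) ((1 * EY w + - mY)%R)%:E)%E); last first.
    by apply: eq_integral => w _; rewrite mul1r.
  rewrite (lin_int _ _ _ P _ EY 1 (- mY) mBC iY).
  rewrite (_ : (\int[P]_(w in Z @^-1` C) (V w)%:E =
      \int[P]_(w in Z @^-1` C) ((Yv w + (- lam * Av w + k))%R)%:E)%E); last first.
    by apply: eq_integral => w _; congr EFin; rewrite /V /k; ring.
  under [X in (_ = X)%E]eq_integral do rewrite EFinD.
  rewrite (@integralD _ _ _ _ _ mBC (fun w => (Yv w)%:E) (fun w => (- lam * Av w + k)%:E)); last 2 first.
  - by apply: integrableS (I1 y).
  - exact: (lin_integrable _ _ _ P _ Av (- lam) k mBC (I1 a)).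
  rewrite (lin_int _ _ _ P _ Av (- lam) k mBC (I1 a)).
  rewrite hAB // integral_cst // hY //.
  have fI : (\int[P]_(w in Z @^-1` C) (Yv w)%:E)%E \is a fin_num.
    by apply: integrable_fin_num => //; apply: integrableS (I1 y).
  rewrite -(fineK fI).
  set p := (X in (m%:E * X)%E).
  have fp : p \is a fin_num by exact: fin_num_measure.
  rewrite -(fineK fp).
  rewrite [X in (k%:E * X)%E](_ : _ = (fine p)%:E); last by rewrite fineK.
  rewrite [X in ((- mY)%:E * X)%E](_ : _ = (fine p)%:E); last by rewrite fineK.
  rewrite mul1e -!EFinM -!EFinD; congr EFin; rewrite /k; ring.
have key := @core _ _ _ _ _ P Z mZ V W mV iV iV2 sW iW hVW.
have LHSe : 'V_P[EY] = (\int[P]_w (W w ^+ 2)%:E)%E by rewrite var_int.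
have EW0 : ('E_P[V] = 0)%E.
  rewrite expectation.unlock.
  have := hVW setT measurableT; rewrite preimage_setT => <-.
  rewrite (_ : (\int[P]_w (W w)%:E = \int[P]_w ((1 * EY w + - mY)%R)%:E)%E); last first.
    by apply: eq_integral => w _; rewrite mul1r.
  rewrite (lin_int _ _ _ P _ EY 1 (- mY) measurableT iY).
  rewrite [X in ((- mY)%:E * X)%E](_ : _ = 1%E); last exact: probability_setT.
  have : ((\int[P]_w (EY w)%:E)%E = mY%:E) by rewrite -EmY expectation.unlock.
  by move=> ->; rewrite mul1e mule1 -EFinD subrr.
have RHSe : (\int[P]_w (V w ^+ 2)%:E)%E = 'V_P[V].
  by rewrite var_int EW0 /=; apply: eq_integral => w _; rewrite subr0.
have Lsum : (Yv \+ (- lam) \o* Av)%R \in Lfun P 2%:E.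
  apply: rpredD; first exact: lee1n.
  + by move=> h; exact: L2.
  + by move=> h; apply: Lfun_scale; [rewrite ler1n|exact: L2].
have fY : 'V_P[Yv] = varY%:E.
  by rewrite fineK //; exact: (variance_fin_num (L2 y)).
have fA : 'V_P[Av] = varA%:E.
  by rewrite fineK //; exact: (variance_fin_num (L2 a)).
have fC : covariance P Av Yv = cov%:E.
  rewrite fineK //; apply: covariance_fin_num; [exact: L1|exact: L1|].
  exact: (Lfun2_mul_Lfun1 (L2 a) (L2 y)).
have VV : 'V_P[V] = (varY + (- lam) ^+ 2 * varA + 2 * (- lam * cov))%:E.
  rewrite eV varianceD_cst_r // varianceD //; last 2 first.
  - exact: (L2 y).
  - by apply: Lfun_scale; [rewrite ler1n|exact: (L2 a)].
  rewrite varianceZ; last exact: (L2 a).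
  rewrite covarianceZr; first last.
  - exact: (Lfun2_mul_Lfun1 (L2 y) (L2 a)).
  - exact: (L1 a).
  - exact: (L1 y).
  by rewrite covarianceC fY fA fC -!EFinM -!EFinD.
have vA' : (0 < 'V_P[Av])%E := vA.
have vY' : (0 < 'V_P[Yv])%E := vY.
have varA0 : 0 < varA by rewrite -lte_fin -fA.
have varY0 : 0 < varY by rewrite -lte_fin -fY.
split.
  rewrite LHSe; apply: (le_trans key); rewrite RHSe VV lee_fin le_eqVlt; apply/orP; left.
  apply/eqP; rewrite /lam; field; exact: lt0r_neq0.
rewrite /rho expr_div_n sqr_sqrtr; last by rewrite mulr_ge0 // ltW.
field; apply/andP; split; exact: lt0r_neq0.
Qed.
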